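(* For every $\varepsilon>0$ there exists $M>0$ such that every instance with $\sum_{j=1}^n h(j)\ge M$ (recall $h(1)=1$) satisfies $H^{PW''}\le \left(\tfrac{12}{7}+\varepsilon\right)H^*$. That is, when $\sum_j h(j)\gg h(1)$, the approximation ratio $H^{PW''}/H^*$ is asymptotically at most $\tfrac{12}{7}$.
   Context: An instance consists of an integer $n\ge 1$ and growth rates $1=h(1)\ge h(2)\ge\cdots\ge h(n)>0$ of bamboos $b_1,\dots,b_n$. Bamboo Garden Trimming (discrete version): - All heights are $0$ initially. - On each day $t=1,2,\dots$ every bamboo $b_j$ grows by $h(j)$. - At the end of each day the gardener cuts exactly one bamboo $\sigma(t)\in\{1,\dots,n\}$ back to height $0$. The height of a schedule $\sigma:\mathbb{N}\to\{1,\dots,n\}$ is the supremum, over all days $t$ and all $j$, of the height of $b_j$ at the end of day $t$ just before the cut. $H^*$ denotes the infimum of this height over all schedules. Value of algorithm PW'': - Split $\{1,\dots,n\}$ into four sets: - $S_1=\{j: \tfrac23<h(j)\le 1\}$; - $S_2=\{j:\tfrac12<h(j)\le\tfrac23\}$; - $S_3=\{j: h(j)\le\tfrac12 \text{ and } \tfrac23 2^{-k}<h(j)\le 2^{-k}\text{ for some integer }k\ge1\}$; - $S_4=\{j: h(j)\le\tfrac12\text{ and } 2^{-(k+1)}<h(j)\le \tfrac23 2^{-k}\text{ for some integer }k\ge 1\}$. - Modified growths: $h''(j)=2^{-k}$ for $j\in S_3$ and $h''(j)=\tfrac23 2^{-k}$ for $j\in S_4$, with $k$ as in the definition of the set. -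 Let $\pi_1=|S_1|$, $sh_3=\sum_{j\in S_3}h''(j)$, $sh_4=\sum_{j\in S_4}h''(j)$, $\pi_3=\lfloor sh_3\rfloor$, $\pi_4=\lfloor sh_4\rfloor$, $f_3=sh_3-\pi_3$, $f_4=sh_4-\pi_4$. - Option (a): $\pi_R(a)=\lceil f_3+f_4\rceil$ and $z(a)=\pi_1+|S_2|+\pi_3+\pi_4+\pi_R(a)$. - Option (b): if $S_2=\emptyset$ put $z(b)=+\infty$. Otherwise let $h^*=\max_{j\in S_2}h(j)$ and $f_2=\tfrac12$ if $|S_2|$ is odd, $f_2=0$ if $|S_2|$ is even. Then $\pi_R(b)=\lceil f_2+f_3+f_4\rceil$ and $z(b)=2h^*\,(\pi_1+\lfloor |S_2|/2\rfloor+\pi_3+\pi_4+\pi_R(b))$. - The value returned by algorithm PW'' is $H^{PW''}=\min\{z(a),z(b)\}$. The paper takes this as the maximum height of the periodic pinwheel trimming schedule that it builds from these partitions. *)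

(* Defs.v *)
From Stdlib Require Import Reals Lra Lia ZArith Arith.
Open Scope R_scope.

(* Bamboos are indexed 1..n; h : nat -> R, values outside 1..n irrelevant. *)

Fixpoint sumR (f : nat -> R) (n : nat) : R :=
  match n with O => 0 | S m => sumR f m + f n end.

Fixpoint countN (P : nat -> bool) (n : nat) : nat :=
  match n with O => O | S m => (countN P m + (if P n then 1 else 0))%nat end.

(* max_{j=1..n, P j} f j  (0 if none; used only for positive f) *)
Fixpoint maxR (P : nat -> bool) (f : nat -> R) (n : nat) : R :=
  match n with O => 0 | S m => if P n then Rmax (maxR P f m) (f n) else maxR P f m end.

Definition floorR (x : R) : R := IZR (Int_part x).
Definition ceilR (x : R) : R := - IZR (Int_part (- x)).
Definition Rltb (x y : R) : bool := if Rlt_dec x y then true else false.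
Definition Rleb (x y : R) : bool := if Rle_dec x y then true else false.

(* A schedule cuts, at the end of day t >= 1, bamboo sigma t in {1..n}. *)
Definition valid_schedule (n : nat) (sigma : nat -> nat) : Prop :=
  forall t : nat, (1 <= t)%nat -> (1 <= sigma t <= n)%nat.

(* height of b_j at the end of day t, after the cut of that day (day 0 = start) *)
Fixpoint height_after (h : nat -> R) (sigma : nat -> nat) (j t : nat) : R :=
  match t with
  | O => 0
  | S t' => if Nat.eqb (sigma t) j then 0 else height_after h sigma j t' + h j
  end.

(* height of b_j at the end of day t >= 1, just before the cut *)
Definition height_before (h : nat -> R) (sigma : nat -> nat) (j t : nat) : R :=
  height_after h sigma j (t - 1) + h j.

(* the height (a supremum) of schedule sigma is <= K *)
Definition schedule_height_le (n : nat) (h : nat -> R) (sigma : nat -> nat) (K : R) : Prop :=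
  forall t j : nat, (1 <= t)%nat -> (1 <= j <= n)%nat -> height_before h sigma j t <= K.

(* For 0 < x <= 1/2, the unique integer k >= 1 with 2^-(k+1) < x <= 2^-k
   is floor(log2(1/x)). *)
Definition lev (x : R) : Z := Int_part (ln (/ x) / ln 2).
Definition p2 (x : R) : R := powerRZ 2 (- lev x).

Definition inS1 (x : R) : bool := Rltb (2/3) x.
Definition inS2 (x : R) : bool := Rltb (1/2) x && Rleb x (2/3).
Definition inS3 (x : R) : bool := Rleb x (1/2) && Rltb (2/3 * p2 x) x.
Definition inS4 (x : R) : bool := Rleb x (1/2) && Rleb x (2/3 * p2 x).

Definition PW_value (n : nat) (h : nat -> R) : R :=
  let pi1 := INR (countN (fun j => inS1 (h j)) n) in
  let c2 := countN (fun j => inS2 (h j)) n in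
  let sh3 := sumR (fun j => if inS3 (h j) then p2 (h j) else 0) n in
  let sh4 := sumR (fun j => if inS4 (h j) then 2/3 * p2 (h j) else 0) n in
  let pi3 := floorR sh3 in
  let pi4 := floorR sh4 in
  let f3 := sh3 - pi3 in
  let f4 := sh4 - pi4 in
  let za := pi1 + INR c2 + pi3 + pi4 + ceilR (f3 + f4) in
  let hstar := maxR (fun j => inS2 (h j)) h n in
  let f2 := if Nat.odd c2 then 1/2 else 0 in
  let zb := 2 * hstar * (pi1 + INR (Nat.div2 c2) + pi3 + pi4 + ceilR (f2 + f3 + f4)) in
  if Nat.eqb c2 0 then za else Rmin za zb.

(* Main.v *)
Require Import Defs.
From Stdlib Require Import Reals.
From Stdlib Require Import Lra Lia ZArith Arith.
Open Scope R_scope.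

Lemma p2_bounds x : 0 < x -> 0 < p2 x /\ p2 x < 2 * x.
Proof.
  intro Hx. split. { unfold p2. apply powerRZ_lt. lra. }
  unfold p2. rewrite powerRZ_Rpower by lra. unfold Rpower.
  assert (H2 : 0 < ln 2) by (pose proof ln_lt_2; lra).
  replace (2 * x) with (exp (ln 2 + ln x))
    by (rewrite exp_plus, !exp_ln by lra; reflexivity).
  apply exp_increasing.
  unfold lev. set (r := ln (/ x) / ln 2).
  destruct (base_Int_part r) as [_ Hb].
  assert (Hr : r * ln 2 = - ln x).
  { unfold r. rewrite ln_Rinv by lra. field. lra. }
  rewrite opp_IZR.
  set (z := IZR (Int_part r)) in *.
  assert (r < z + 1) by lra.
  assert (r * ln 2 < (z+1) * ln 2) by (apply Rmult_lt_compat_r; lra).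
  nra.
Qed.

Lemma sumR_le f g n : (forall j, (1 <= j <= n)%nat -> f j <= g j) -> sumR f n <= sumR g n.
Proof.
  induction n; intro H; simpl. lra.
  assert (sumR f n <= sumR g n) by (apply IHn; intros; apply H; lia).
  assert (f (S n) <= g (S n)) by (apply H; lia). lra.
Qed.

Lemma sumR_plus f g n : sumR (fun j => f j + g j) n = sumR f n + sumR g n.
Proof. induction n; simpl; lra. Qed.

Lemma sumR_scal c f n : sumR (fun j => c * f j) n = c * sumR f n.
Proof. induction n; simpl. lra. rewrite IHn. lra. Qed.

Lemma sumR_const c n : sumR (fun _ => c) n = INR n * c.
Proof. induction n; simpl sumR. simpl; lra. rewrite IHn, S_INR. lra. Qed.

Lemma sumR_nonneg f n : (forall j, (1 <= j <= n)%nat -> 0 <= f j) -> 0 <= sumR f n.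
Proof.
  intro H. replace 0 with (sumR (fun _ => 0) n).
  apply sumR_le; auto. rewrite sumR_const; lra.
Qed.

Lemma countN_sumR P n : INR (countN P n) = sumR (fun j => if P j then 1 else 0) n.
Proof.
  induction n; simpl countN; simpl sumR. reflexivity.
  rewrite plus_INR, IHn. destruct (P (S n)); simpl; lra.
Qed.

Lemma maxR_nonneg P f n : 0 <= maxR P f n.
Proof.
  induction n; simpl. lra. destruct (P (S n)); auto.
  eapply Rle_trans; [exact IHn | apply Rmax_l].
Qed.

Lemma maxR_le P f n c : 0 <= c -> (forall j, P j = true -> f j <= c) -> maxR P f n <= c.
Proof.
  intros Hc H. induction n; simpl. lra.
  destruct (P (S n)) eqn:E; auto.
  apply Rmax_lub; auto.
Qed.

Lemma floorR_le x : floorR x <= x.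
Proof. unfold floorR. destruct (base_Int_part x). lra. Qed.

Lemma ceilR_le x : ceilR x <= x + 1.
Proof. unfold ceilR. destruct (base_Int_part (- x)). lra. Qed.

Lemma pointwise x : 0 < x ->
  8 * ((if inS1 x then 1 else 0) + (if inS3 x then p2 x else 0)
       + (if inS4 x then 2/3 * p2 x else 0))
  + 6 * (if inS2 x then 1 else 0) <= 12 * x.
Proof.
  intro Hx. destruct (p2_bounds x Hx) as [Ha Hb].
  unfold inS1, inS2, inS3, inS4, Rltb, Rleb.
  repeat match goal with |- context [Rlt_dec ?a ?b] => destruct (Rlt_dec a b) end;
  repeat match goal with |- context [Rle_dec ?a ?b] => destruct (Rle_dec a b) end;
  simpl; lra.
Qed.

Lemma div2_le c : INR (Nat.div2 c) <= INR c / 2.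
Proof.
  pose proof (Nat.div2_odd c) as E.
  assert (2 * Nat.div2 c <= c)%nat.
  { rewrite E at 2. destruct (Nat.odd c); simpl; lia. }
  apply le_INR in H. rewrite mult_INR in H. simpl in H. lra.
Qed.

Lemma inS2_le x : inS2 x = true -> x <= 2/3.
Proof.
  unfold inS2, Rltb, Rleb. destruct (Rlt_dec _ _); destruct (Rle_dec _ _); simpl; lra || discriminate.
Qed.

Lemma PW_upper n h : (forall j, (1 <= j <= n)%nat -> 0 < h j) ->
  PW_value n h <= 12/7 * sumR h n + 10/7.
Proof.
  intro Hpos.
  set (a := fun j => if inS1 (h j) then 1 else 0).
  set (b := fun j => if inS2 (h j) then 1 else 0).
  set (c3 := fun j => if inS3 (h j) then p2 (h j) else 0).
  set (c4 := fun j => if inS4 (h j) then 2/3 * p2 (h j) else 0).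
  assert (Hpt : 8 * (sumR a n + sumR c3 n + sumR c4 n) + 6 * sumR b n <= 12 * sumR h n).
  { rewrite <- !sumR_plus, <- !sumR_scal, <- sumR_plus.
    apply sumR_le. intros j Hj. apply pointwise. auto. }
  assert (Ha : 0 <= sumR a n) by (apply sumR_nonneg; intros; unfold a; destruct inS1; lra).
  assert (Hc3 : 0 <= sumR c3 n).
  { apply sumR_nonneg; intros j Hj; unfold c3; destruct inS3; try lra.
    destruct (p2_bounds (h j)); auto; lra. }
  assert (Hc4 : 0 <= sumR c4 n).
  { apply sumR_nonneg; intros j Hj; unfold c4; destruct inS4; try lra.
    destruct (p2_bounds (h j)); auto; lra. }
  assert (Hpi1 : INR (countN (fun j => inS1 (h j)) n) = sumR a n) by apply countN_sumR.
  assert (Hc2 : INR (countN (fun j => inS2 (h j)) n) = sumR b n) by apply countN_sumR.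
  assert (Hhs0 : 0 <= maxR (fun j => inS2 (h j)) h n) by apply maxR_nonneg.
  assert (Hhs1 : maxR (fun j => inS2 (h j)) h n <= 2/3)
    by (apply maxR_le; [lra | intros; apply inS2_le; auto]).
  unfold PW_value.
  fold a b c3 c4.
  set (c2 := countN (fun j => inS2 (h j)) n) in *.
  set (hs := maxR (fun j => inS2 (h j)) h n) in *.
  set (pi1 := INR (countN (fun j => inS1 (h j)) n)) in *.
  set (sh3 := sumR c3 n). set (sh4 := sumR c4 n).
  pose proof (floorR_le sh3). pose proof (floorR_le sh4).
  pose proof (ceilR_le (sh3 - floorR sh3 + (sh4 - floorR sh4))).
  set (f2 := if Nat.odd c2 then 1/2 else 0).
  assert (Hf2 : f2 <= 1/2) by (unfold f2; destruct Nat.odd; lra).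
  pose proof (ceilR_le (f2 + (sh3 - floorR sh3) + (sh4 - floorR sh4))).
  pose proof (div2_le c2).
  assert (Hza : pi1 + INR c2 + floorR sh3 + floorR sh4 + ceilR (sh3 - floorR sh3 + (sh4 - floorR sh4))
     <= pi1 + INR c2 + sh3 + sh4 + 1) by lra.
  set (za := pi1 + INR c2 + floorR sh3 + floorR sh4 + ceilR (sh3 - floorR sh3 + (sh4 - floorR sh4))) in *.
  set (X := pi1 + INR (Nat.div2 c2) + floorR sh3 + floorR sh4 + ceilR (f2 + (sh3 - floorR sh3) + (sh4 - floorR sh4))).
  assert (HX : X <= (pi1 + sh3 + sh4 + 3/2) + INR c2 / 2) by (unfold X; lra).
  assert (Hzb : 2 * hs * X <= 4/3 * (pi1 + sh3 + sh4 + 3/2) + 2/3 * INR c2).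
  { assert (0 <= pi1 + sh3 + sh4 + 3/2) by (unfold sh3, sh4; lra).
    assert (0 <= INR c2) by apply pos_INR.
    assert (2 * hs * X <= 2 * hs * ((pi1 + sh3 + sh4 + 3/2) + INR c2 / 2))
      by (apply Rmult_le_compat_l; lra).
    nra. }
  unfold sh3, sh4 in *.
  assert (0 <= INR c2) by apply pos_INR.
  destruct (Nat.eqb c2 0) eqn:E.
  - apply Nat.eqb_eq in E. assert (INR c2 = 0) by (rewrite E; reflexivity). lra.
  - assert (Rmin za (2 * hs * X) <= 4/7 * za + 3/7 * (2 * hs * X)).
    { unfold Rmin. destruct (Rle_dec za (2 * hs * X)); lra. }
    lra.
Qed.

Fixpoint Ncut (sigma : nat -> nat) (j t : nat) : R :=
  match t with O => 0 | S t' => Ncut sigma j t' + (if Nat.eqb (sigma t) j then 1 else 0) end.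

Lemma ind_sum d n : (d > n)%nat -> sumR (fun j => if Nat.eqb d j then 1 else 0) n = 0.
Proof.
  induction n; intro H; simpl. reflexivity.
  rewrite IHn by lia. destruct (Nat.eqb_spec d (S n)); [lia|lra].
Qed.

Lemma ind_sum_le d n : sumR (fun j => if Nat.eqb d j then 1 else 0) n <= 1.
Proof.
  induction n; simpl. lra.
  destruct (Nat.eqb_spec d (S n)).
  - rewrite ind_sum by lia. lra.
  - lra.
Qed.

Lemma Ncut_sum sigma n t : sumR (fun j => Ncut sigma j t) n <= INR t.
Proof.
  induction t; simpl Ncut.
  - rewrite sumR_const. simpl. lra.
  - rewrite sumR_plus, S_INR. pose proof (ind_sum_le (sigma (S t)) n). lra.
Qed.

Lemma invariant n h sigma K j : schedule_height_le n h sigma K -> (1 <= j <= n)%nat ->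
  forall t, h j * INR t <= K * Ncut sigma j t + height_after h sigma j t
            /\ height_after h sigma j t <= K - h j.
Proof.
  intros HK Hj t. induction t.
  - simpl. split; [lra|]. pose proof (HK 1%nat j (le_n 1) Hj).
    unfold height_before in H. simpl in H. lra.
  - destruct IHt as [I1 I2].
    assert (HB : height_before h sigma j (S t) <= K) by (apply HK; auto; lia).
    unfold height_before in HB. replace (S t - 1)%nat with t in HB by lia.
    assert (HB2 : height_before h sigma j (S (S t)) <= K) by (apply HK; auto; lia).
    unfold height_before in HB2. replace (S (S t) - 1)%nat with (S t) in HB2 by lia.
    rewrite S_INR. simpl Ncut. simpl height_after in *.
    destruct (Nat.eqb (sigma (S t)) j); split; lra.
Qed.

Lemma exists_big r : exists t : nat, r < INR t.
Proof.
  destruct (archimed r) as [H1 _].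
  destruct (Z_le_gt_dec (up r) 0).
  - exists 0%nat. simpl. apply IZR_le in l. lra.
  - exists (Z.to_nat (up r)). rewrite INR_IZR_INZ, Z2Nat.id by lia. lra.
Qed.

Lemma lower_bound n h sigma K : (forall j, (1 <= j <= n)%nat -> 0 < h j) -> (1 <= n)%nat -> h 1%nat = 1 ->
  schedule_height_le n h sigma K -> sumR h n <= K.
Proof.
  intros Hp Hn H1 HK.
  assert (HKpos : 1 <= K).
  { pose proof (HK 1%nat 1%nat (le_n 1) (conj (le_n 1) Hn)). unfold height_before in H.
    simpl in H. lra. }
  assert (Hall : forall t, INR t * sumR h n <= K * (INR t + INR n)).
  { intro t.
    assert (sumR (fun j => h j * INR t) n <= sumR (fun j => K * (Ncut sigma j t + 1)) n).
    { apply sumR_le. intros j Hj. destruct (invariant n h sigma K j HK Hj t). pose proof (Hp j Hj). lra. }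
    rewrite sumR_scal, sumR_plus, sumR_const in H.
    assert (sumR (fun j => h j * INR t) n = INR t * sumR h n).
    { rewrite <- sumR_scal. clear. induction n; simpl; [lra|]. rewrite IHn. lra. }
    pose proof (Ncut_sum sigma n t). assert (K * sumR (fun j => Ncut sigma j t) n <= K * INR t) by (apply Rmult_le_compat_l; lra). lra. }
  destruct (Rle_dec (sumR h n) K) as [|Hc]; auto.
  exfalso. apply Rnot_le_lt in Hc.
  destruct (exists_big (K * INR n / (sumR h n - K))) as [t Ht].
  pose proof (Hall t).
  assert (K * INR n < INR t * (sumR h n - K)).
  { apply (Rmult_lt_compat_r (sumR h n - K)) in Ht; [|lra].
    unfold Rdiv in Ht. rewrite Rmult_assoc, Rinv_l in Ht; lra. }
  lra.
Qed.

Lemma hpos n h : (forall j : nat, (1 <= j)%nat -> (j < n)%nat -> h (S j) <= h j) ->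
  0 < h n -> forall j, (1 <= j <= n)%nat -> 0 < h j.
Proof.
  intros Hm Hn j Hj.
  assert (forall k, (j + k <= n)%nat -> h (j + k)%nat <= h j).
  { induction k; intro Hk. rewrite Nat.add_0_r; lra.
    replace (j + S k)%nat with (S (j + k)) by lia.
    eapply Rle_trans; [apply Hm; lia | apply IHk; lia]. }
  specialize (H (n - j)%nat ltac:(lia)). replace (j + (n - j))%nat with n in H by lia. lra.
Qed.

Theorem proposition1 (eps : R) (Heps : 0 < eps) :
  exists M : R, 0 < M /\
    forall (n : nat) (h : nat -> R),
      (1 <= n)%nat ->
      h 1%nat = 1 ->
      (forall j : nat, (1 <= j)%nat -> (j < n)%nat -> h (S j) <= h j) ->
      0 < h n ->
      M <= sumR h n ->
      forall (sigma : nat -> nat) (K : R),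
        valid_schedule n sigma ->
        schedule_height_le n h sigma K ->
        PW_value n h <= (12/7 + eps) * K.
Proof.
  exists (10 / 7 / eps). split.
  { apply Rdiv_lt_0_compat; lra. }
  intros n h Hn H1 Hm Hhn HM sigma K _ HK.
  pose proof (PW_upper n h (hpos n h Hm Hhn)).
  pose proof (lower_bound n h sigma K (hpos n h Hm Hhn) Hn H1 HK).
  assert (10/7 <= eps * K).
  { assert (10/7/eps <= K) by lra.
    apply (Rmult_le_compat_l eps) in H2; [|lra].
    unfold Rdiv in H2. field_simplify in H2; lra. }
  nra.
Qed.
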